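(* Let $q\in\mathbb{C}\setminus\{0\}$ with a fixed square root $q^{1/2}$, and let $D_x,D_y$ be invertible elements of an associative complex algebra satisfying $D_x^aD_y^b=q^{ab}D_y^bD_x^a$ for all $a,b\in\mathbb{Z}$. For $m=(m_1,m_2)\in\mathbb{Z}^2$ put $T_m=(q^{1/2})^{m_1m_2}D_y^{m_1}D_x^{m_2}$, and for $m,n\in\mathbb{Z}^2$ let $m\wedge n=m_1n_2-m_2n_1$. Define $[A,B]=AB-BA$ and, recursively for $n\ge3$, $$[A_1,\dots,A_n]=\sum_{s=1}^n(-1)^{s+1}A_s[A_1,\dots,\widehat{A_s},\dots,A_n].$$ Then for every $n\ge2$ and all $i_1,\dots,i_n\in\mathbb{Z}^2$, $$[T_{i_1},\dots,T_{i_n}]=\sum_{\sigma\in S_n}\mathrm{sgn}(\sigma)\,(q^{1/2})^{\sum_{1\le s<k\le n}i_{\sigma(k)}\wedge i_{\sigma(s)}}\;T_{i_1+\cdots+i_n}.$$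
   Context: The hat denotes omission of that entry. The elements $T_m$ satisfy $T_nT_m=(q^{1/2})^{m\wedge n}T_{n+m}$. *)

(* Defs.v *)
From HB Require Import structures.
From mathcomp Require Import all_boot all_order all_algebra all_fingroup.
From mathcomp Require Import reals.
From mathcomp Require Import complex.
Set Implicit Arguments. Unset Strict Implicit. Unset Printing Implicit Defensive.
Import Order.TTheory GRing.Theory Num.Theory.
Local Open Scope ring_scope.

(* Integer powers of an invertible element x with given two-sided inverse xi. *)
Definition zpow {A : nzRingType} (x xi : A) (a : int) : A :=
  match a with Posz n => x ^+ n | Negz n => xi ^+ n.+1 end.

Definition wedge (m n : int * int) : int := m.1 * n.2 - m.2 * n.1.

Definition Tm {R : realType} {A : lalgType R[i]} (h : R[i]) (Dx Dxi Dy Dyi : A)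
  (m : int * int) : A :=
  (h ^ (m.1 * m.2)) *: (zpow Dy Dyi m.1 * zpow Dx Dxi m.2).

(* Iterated bracket [A_1,...,A_k] of a list of length k >= 2:
   [A,B] = AB - BA and [A_1..A_k] = sum_s (-1)^(s+1) A_s [A_1..^A_s..A_k]
   (here s is 0-based, so the sign is (-1)^s). *)
Fixpoint nbr {A : nzRingType} (k : nat) (s : seq A) : A :=
  match k with
  | 0 | 1 => 0
  | 2 => nth 0 s 0 * nth 0 s 1 - nth 0 s 1 * nth 0 s 0
  | S k' => \sum_(t < k) (-1) ^+ t * nth 0 s t * nbr k' (take t s ++ drop t.+1 s)
  end.

Definition bracket {A : nzRingType} (s : seq A) : A := nbr (size s) s.

(* Main.v *)
Require Import Defs.
From HB Require Import structures.
From mathcomp Require Import all_boot all_order all_algebra all_fingroup.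
From mathcomp Require Import reals.
From mathcomp Require Import complex.
From mathcomp Require Import zify ring.
Import Order.TTheory GRing.Theory Num.Theory.
Local Open Scope ring_scope.

Definition Pm {A : nzRingType} n (s : seq A) : A :=
  \sum_(σ : 'S_n) (-1) ^+ σ * \prod_(k < n) nth 0 s (σ k).

Lemma nth_rem T (x0 : T) (s : seq T) t m : (t < size s)%N ->
  nth x0 (take t s ++ drop t.+1 s) m = nth x0 s (bump t m).
Proof.
move=> Ht; rewrite nth_cat size_take Ht /bump.
case: (ltnP m t) => H.
  by rewrite nth_take // leqNgt H addn0.
rewrite nth_drop; congr nth.
rewrite add1n; lia.
Qed.

Lemma Pm_rec {A : nzRingType} n (s : seq A) : size s = n.+1 ->
  Pm n.+1 s = \sum_(t < n.+1) (-1) ^+ t * nth 0 s t * Pm n (take t s ++ drop t.+1 s).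
Proof.
move=> Hs; rewrite /Pm (partition_big (fun σ : 'S_n.+1 => σ ord0) predT) //=.
apply: eq_bigr => j0 _.
rewrite (reindex (lift_perm ord0 j0)); last first.
  pose ulsf i (s1 : 'S_n.+1) k := odflt k (unlift (s1 i) (s1 (lift i k))).
  have ulsfK i (s1 : 'S_n.+1) k: lift (s1 i) (ulsf i s1 k) = s1 (lift i k).
    rewrite /ulsf; have:= neq_lift i k.
    by rewrite -(can_eq (permK s1)) => /unlift_some[] ? ? ->.
  have inj_ulsf: injective (ulsf ord0 _).
    move=> s0; apply: can_inj (ulsf (s0 ord0) s0^-1%g) _ => k'.
    by rewrite {1}/ulsf ulsfK !permK liftK.
  exists (fun s1 => perm (inj_ulsf s1)) => [s0 _ | s0].
    by apply/permP=> k'; rewrite permE /ulsf lift_perm_lift lift_perm_id liftK.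
  move/(s0 _ =P _) => si0; apply/permP=> k.
  case: (unliftP ord0 k) => [k'|] ->; rewrite ?lift_perm_id //.
  by rewrite lift_perm_lift -si0 permE ulsfK.
rewrite big_distrr /=.
apply: eq_big => [τ | τ _]; first by rewrite lift_perm_id eqxx.
rewrite odd_lift_perm /= signr_addb big_ord_recl lift_perm_id.
have -> : \prod_(i < n) nth 0 s (lift_perm ord0 j0 τ (lift ord0 i))
   = \prod_(k < n) nth 0 (take j0 s ++ drop j0.+1 s) (τ k).
  apply: eq_bigr => k _; rewrite lift_perm_lift nth_rem ?Hs //.
rewrite signr_odd !mulrA; congr (_ * _); rewrite -!mulrA; congr (_ * _).
exact/esym/commr_sign.
Qed.

Lemma Pm1 {A : nzRingType} (s : seq A) : Pm 1 s = nth 0 s 0.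
Proof.
rewrite /Pm (big_pred1 1%g); last first.
  move=> g /=; apply/esym/eqP/permP => x; rewrite perm1; by rewrite [LHS]ord1 [RHS]ord1.
by rewrite odd_perm1 expr0 mul1r big_ord1 perm1.
Qed.

Lemma nbr_Pm {A : nzRingType} k (s : seq A) : (2 <= k)%N -> size s = k -> nbr k s = Pm k s.
Proof.
elim: k s => [|k IH] s //; case: k IH => [|k] IH //.
case: k IH => [|k] IH _ Hs.
  rewrite Pm_rec // !big_ord_recl big_ord0 !Pm1 !nth_rem ?Hs //= addr0.
  by rewrite /bump /= expr0 expr1 !mul1r mulN1r mulNr.
rewrite Pm_rec //.
have -> : nbr k.+3 s = \sum_(t < k.+3) (-1) ^+ t * nth 0 s t * nbr k.+2 (take t s ++ drop t.+1 s) by [].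
apply: eq_bigr => t _; rewrite IH //.
rewrite size_cat size_take size_drop Hs ltn_ord; have := ltn_ord t; lia.
Qed.
Section Z.
Variables (A : nzRingType) (x xi : A).
Hypotheses (H1 : x * xi = 1) (H2 : xi * x = 1).

Lemma zpowS a : zpow x xi (a + 1) = zpow x xi a * x.
Proof.
case: a => m.
  have -> : Posz m + 1 = Posz m.+1 by rewrite -addn1 PoszD.
  by rewrite /= exprSr.
case: m => [|k].
  have -> : Negz 0 + 1 = 0 by [].
  by rewrite /= expr0 expr1 H2.
have -> : Negz k.+1 + 1 = Negz k by rewrite !NegzE; lia.
by rewrite /= [xi ^+ k.+2]exprSr -mulrA H2 mulr1.
Qed.

Lemma zpowN1 a : zpow x xi (a - 1) = zpow x xi a * xi.
Proof.
case: a => m.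
  case: m => [|k].
    have -> : Posz 0 - 1 = Negz 0 by [].
    by rewrite /= expr0 expr1 mul1r.
  have -> : Posz k.+1 - 1 = Posz k by rewrite -addn1 PoszD addrK.
  by rewrite /= exprSr -mulrA H1 mulr1.
have -> : Negz m - 1 = Negz m.+1 by rewrite !NegzE; lia.
by rewrite /= [xi ^+ m.+2]exprSr.
Qed.

Lemma zpowD a b : zpow x xi (a + b) = zpow x xi a * zpow x xi b.
Proof.
case: b => n.
  elim: n => [|n IH]; first by rewrite addr0 /= expr0 mulr1.
  have -> : a + Posz n.+1 = (a + Posz n) + 1 by rewrite -addn1 PoszD addrA.
  by rewrite zpowS IH /= exprSr mulrA.
elim: n => [|n IH].
  have -> : a + Negz 0 = a - 1 by [].
  by rewrite zpowN1 /= expr1.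
have -> : a + Negz n.+1 = (a + Negz n) - 1 by rewrite !NegzE; lia.
by rewrite zpowN1 IH /= [xi ^+ n.+2]exprSr mulrA.
Qed.
End Z.

Definition W (n : nat) (a : nat -> int * int) : int :=
  \sum_(s < n) \sum_(k < n | (s < k)%N) wedge (a k) (a s).

Lemma Wrec n a : W n.+1 a = W n a + wedge (a n) (\sum_(j < n) (a j).1, \sum_(j < n) (a j).2).
Proof.
rewrite /W big_ord_recr /= [X in _ + X]big_pred0; last first.
  by move=> k; rewrite /= ltnNge -ltnS ltn_ord.
rewrite addr0.
have -> : \sum_(i < n) \sum_(k < n.+1 | (widen_ord (leqnSn n) i < k)%N) wedge (a k) (a (widen_ord (leqnSn n) i))
   = \sum_(i < n) (\sum_(k < n | (i < k)%N) wedge (a k) (a i) + wedge (a n) (a i)).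
  apply: eq_bigr => s _; rewrite big_mkcond big_ord_recr /= ltn_ord -big_mkcond //.
rewrite big_split /=; congr (_ + _).
by rewrite /wedge /= mulr_sumr mulr_sumr -sumrB.
Qed.
Section T.
Variables (R : realType) (A : algType R[i]) (q h : R[i]) (Dx Dxi Dy Dyi : A).
Hypotheses (hnz : h != 0) (hq : h ^+ 2 = q).
Hypotheses (H1 : Dx * Dxi = 1) (H2 : Dxi * Dx = 1) (H3 : Dy * Dyi = 1) (H4 : Dyi * Dy = 1).
Hypothesis Hc : forall a b : int,
      zpow Dx Dxi a * zpow Dy Dyi b = (q ^ (a * b)) *: (zpow Dy Dyi b * zpow Dx Dxi a).

Local Notation T := (Tm h Dx Dxi Dy Dyi).

Lemma TmM x y : T x * T y = h ^ (wedge y x) *: T (x.1 + y.1, x.2 + y.2).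
Proof.
rewrite /Tm /= -scalerAl -scalerAr scalerA.
have -> : zpow Dy Dyi x.1 * zpow Dx Dxi x.2 * (zpow Dy Dyi y.1 * zpow Dx Dxi y.2)
  = zpow Dy Dyi x.1 * (zpow Dx Dxi x.2 * zpow Dy Dyi y.1) * zpow Dx Dxi y.2 by rewrite !mulrA.
rewrite Hc -scalerAr -scalerAl scalerA.
rewrite !mulrA -zpowD // -mulrA -zpowD //.
rewrite scalerA; congr (_ *: _).
have -> : q ^ (x.2 * y.1) = h ^ (2 * (x.2 * y.1)) by rewrite -hq -(exprz_exp h 2).
rewrite -!expfzDr //; congr (h ^ _); rewrite /wedge; ring.
Qed.

Lemma prodTm n (a : nat -> int * int) : \prod_(k < n) T (a k) =
  h ^ (W n a) *: T (\sum_(j < n) (a j).1, \sum_(j < n) (a j).2).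
Proof.
elim: n => [|n IH].
  by rewrite /W /Tm !big_ord0 /= mulr0 !expr0z !scale1r expr0 mulr1.
rewrite big_ord_recr /= IH -scalerAl TmM scalerA -expfzDr // -Wrec.
by rewrite [in RHS](big_ord_recr n) [in RHS](big_ord_recr n).
Qed.
End T.

Theorem theorem5 (R : realType) (A : algType R[i]) (q h : R[i])
  (Dx Dxi Dy Dyi : A) :
  q != 0 -> h ^+ 2 = q ->
  Dx * Dxi = 1 -> Dxi * Dx = 1 -> Dy * Dyi = 1 -> Dyi * Dy = 1 ->
  (forall a b : int,
      zpow Dx Dxi a * zpow Dy Dyi b = (q ^ (a * b)) *: (zpow Dy Dyi b * zpow Dx Dxi a)) ->
  forall (n : nat) (i : 'I_n -> int * int), (2 <= n)%N ->
  bracket [seq Tm h Dx Dxi Dy Dyi (i j) | j <- enum 'I_n] =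
  \sum_(sigma : 'S_n)
     ((-1) ^+ odd_perm sigma *
      h ^ (\sum_(s < n) \sum_(k < n | (s < k)%N) wedge (i (sigma k)) (i (sigma s))))
     *: Tm h Dx Dxi Dy Dyi (\sum_(j < n) (i j).1, \sum_(j < n) (i j).2).
Proof.
move=> qnz hq H1 H2 H3 H4 Hc n i n2.
have hnz : h != 0 by apply: contraNneq qnz => h0; rewrite -hq h0 expr2 mulr0.
rewrite /bracket size_map size_enum_ord nbr_Pm ?size_map ?size_enum_ord //.
rewrite /Pm; apply: eq_bigr => σ _.
pose a m := nth (0, 0) [seq i (σ j) | j <- enum 'I_n] m.
have ha : forall k : 'I_n, a k = i (σ k).
  by move=> k; rewrite /a (nth_map k) ?size_enum_ord // nth_ord_enum.
have -> : \prod_(k < n) nth 0 [seq Tm h Dx Dxi Dy Dyi (i j) | j <- enum 'I_n] (σ k)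
   = \prod_(k < n) Tm h Dx Dxi Dy Dyi (a k).
  apply: eq_bigr => k _; rewrite (nth_map (σ k)) ?size_enum_ord // nth_ord_enum ha //.
rewrite (@prodTm R A q h Dx Dxi Dy Dyi hnz hq H1 H2 H3 H4 Hc).
have -> : W n a = \sum_(s < n) \sum_(k < n | (s < k)%N) wedge (i (σ k)) (i (σ s)).
  by apply: eq_bigr => s _; apply: eq_bigr => k _; rewrite !ha.
have -> : \sum_(j < n) (a j).1 = \sum_(j < n) (i j).1.
  by rewrite [RHS](reindex_inj (@perm_inj _ σ)); apply: eq_bigr => j _; rewrite ha.
have -> : \sum_(j < n) (a j).2 = \sum_(j < n) (i j).2.
  by rewrite [RHS](reindex_inj (@perm_inj _ σ)); apply: eq_bigr => j _; rewrite ha.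
rewrite -scalerA scaler_sign mulr_sign. reflexivity.
by rewrite -enumT size_enum_ord.
Qed.
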